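(* Let $T=(t_{ij})$ be an $\mathbb{N}$-tableau of shape $\lambda$ and let $\widetilde{U}_T=(\widetilde{u}_{ijk})$ be the array defined in the context. Then for all $(i,j,k)$ in its index set: $\widetilde{u}_{i,j,0}=-\mathrm{rect}_T(i,j)$, $\widetilde{u}_{i,j,\min(i,j)}=0$, and for $0<k<\min(i,j)$, \[\widetilde{u}_{ijk}=\max\bigl(\widetilde{u}_{i-1,j,k}+\widetilde{u}_{i,j-1,k-1},\ \widetilde{u}_{i-1,j,k-1}+\widetilde{u}_{i,j-1,k}\bigr)-\widetilde{u}_{i-1,j-1,k-1}.\] That is, $\widetilde{U}_T$ satisfies the tropical octahedron recurrence.
   Context: Partitions are drawn in English notation with matrix coordinates: the box in row $i$ and column $j$ is $(i,j)$. An $\mathbb{N}$-tableau of shape $\lambda$ is an assignment of a nonnegative integer to each box of $\lambda$. For a box $(i,j)$ of $\lambda$, $\mathrm{rect}_T(i,j)=\sum_{k=1}^{i}\sum_{l=1}^{j}t_{kl}$; if $(i,j)$ is not a box of $\lambda$, $\mathrm{rect}_T(i,j)$ is interpreted as $0$. The array $U_T=(u_{ijk})$ is indexed by all $(i,j,k)\in\mathbb{Z}^3$ such that $(i+a,j+b)$ is a box of $\lambda$ for some $a,b\in\{0,1,2\}$ and $0\le k\le\min(i,j)+1$. Its entries are: $u_{i,j,0}=0$ and $u_{i,j,\min(i,j)+1}=0$, and for $0<k<\min(i,j)+1$, \[u_{ijk}=\min(u_{i-1,j,k-1},u_{i,j-1,k-1})+\max(u_{i-1,j,k},u_{i,j-1,k})-u_{i-1,j-1,k-1}+t_{ijk},\]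 where $t_{ij1}=t_{ij}$ if $(i,j)\in\lambda$ (and $0$ otherwise) and $t_{ijk}=0$ for $k\ne1$. The array $\overline{U}_T=(\overline{u}_{ijk})$ is indexed by all $(i,j,k)\in\mathbb{Z}^3$ such that $(i+a,j+b)$ is a box of $\lambda$ for some $a,b\in\{0,1\}$ and $0\le k\le\min(i,j)$, with $\overline{u}_{ijk}=\sum_{l=0}^{k}u_{ijl}$. Finally $\widetilde{U}_T=(\widetilde{u}_{ijk})$ has the same index set as $\overline{U}_T$ and $\widetilde{u}_{ijk}=\overline{u}_{ijk}-\mathrm{rect}_T(i,j)$. *)

(* Defs.v *)
From mathcomp Require Import all_boot all_order all_algebra.
Set Implicit Arguments. Unset Strict Implicit. Unset Printing Implicit Defensive.
Import Order.TTheory GRing.Theory Num.Theory.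
Local Open Scope ring_scope.

Definition is_partition (la : seq nat) : bool :=
  sorted geq la && all (fun x => (0 < x)%N) la.

(* (i,j) is a box of la (English notation, 1-based matrix coordinates). *)
Definition in_shape (la : seq nat) (i j : nat) : bool :=
  [&& (0 < i)%N, (i <= size la)%N, (0 < j)%N & (j <= nth 0%N la i.-1)%N].

(* An N-tableau of shape la is given by T : nat -> nat -> nat; only the
   values T i j at boxes (i,j) of la are ever used. *)

Definition tval (la : seq nat) (T : nat -> nat -> nat) (i j : nat) : int :=
  if in_shape la i j then (T i j)%:Z else 0.

Definition rect (la : seq nat) (T : nat -> nat -> nat) (i j : nat) : int :=
  if in_shape la i j then
    \sum_(1 <= k < i.+1) \sum_(1 <= l < j.+1) (T k l)%:Z
  else 0.

(* The array U_T = (u_{ijk}) on nonnegative indices (i,j,k):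
   u_{i,j,0} = 0, u_{i,j,min(i,j)+1} = 0 (and entries outside the index set,
   k > min(i,j)+1, are set to 0, they are never used), and for
   0 < k < min(i,j)+1:
   u_{ijk} = min(u_{i-1,j,k-1}, u_{i,j-1,k-1}) + max(u_{i-1,j,k}, u_{i,j-1,k})
             - u_{i-1,j-1,k-1} + t_{ijk}. *)
Fixpoint uarr (la : seq nat) (T : nat -> nat -> nat) (i : nat) : nat -> nat -> int :=
  match i with
  | 0%N => fun _ _ => 0
  | i'.+1 =>
    let prev := uarr la T i' in
    fix g (j : nat) : nat -> int :=
      match j with
      | 0%N => fun _ => 0
      | j'.+1 => fun k =>
        if (0 < k)%N && (k < minn i'.+1 j'.+1 + 1)%N then
          Num.min (prev j'.+1 k.-1) (g j' k.-1)
          + Num.max (prev j'.+1 k) (g j' k)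
          - prev j' k.-1
          + (if k == 1%N then tval la T i'.+1 j'.+1 else 0)
        else 0
      end
  end.

Definition ubar (la : seq nat) (T : nat -> nat -> nat) (i j k : nat) : int :=
  \sum_(0 <= l < k.+1) uarr la T i j l.

Definition utilde (la : seq nat) (T : nat -> nat -> nat) (i j k : nat) : int :=
  ubar la T i j k - rect la T i j.

(* Main.v *)
Require Import Defs.
From mathcomp Require Import all_boot all_order all_algebra zify.
Import Order.TTheory GRing.Theory Num.Theory.
Local Open Scope ring_scope.

Notation tv := Defs.tval.

Ltac mm := repeat match goal with
  | |- context[Num.max ?x ?y] => case: (leP x y) => ?
  | |- context[Num.min ?x ?y] => case: (leP x y) => ? end; lia.

Section S.
Variables (la : seq nat) (T : nat -> nat -> nat).
Notation u := (uarr la T).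

Lemma u0j j k : u 0 j k = 0. Proof. by []. Qed.
Lemma ui0 i k : u i 0 k = 0. Proof. by case: i. Qed.
Lemma uij0 i j : u i j 0 = 0. Proof. by case: i => // i; case: j. Qed.

Lemma uSS i j k : u i.+1 j.+1 k = if (0<k)%N && (k < minn i.+1 j.+1 + 1)%N then Num.min (u i j.+1 k.-1) (u i.+1 j k.-1) + Num.max (u i j.+1 k) (u i.+1 j k) - u i j k.-1 + (if k==1%N then tv la T i.+1 j.+1 else 0) else 0.
Proof. by []. Qed.

Lemma u_big i j k : (minn i j < k)%N -> u i j k = 0.
Proof.
case: i => [|i]; first by []. case: j => [|j]; first by rewrite ui0.
move=> h; rewrite uSS; case: ifP => //; lia.
Qed.

Lemma u_rec i j k : (0 < k)%N -> (k <= minn i.+1 j.+1)%N ->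
  u i.+1 j.+1 k = Num.min (u i j.+1 k.-1) (u i.+1 j k.-1) + Num.max (u i j.+1 k) (u i.+1 j k) - u i j k.-1 + (if k==1%N then tv la T i.+1 j.+1 else 0).
Proof. move=> h1 h2; rewrite uSS; case: ifP => //; lia. Qed.

Lemma tv_ge0 i j : 0 <= tv la T i j.
Proof. rewrite /Defs.tval; case: ifP => //. Qed.



Lemma inv i : forall j, (forall k, 0 <= u i j k) /\
  (forall k, (0 < k)%N -> u i j k.+1 <= u i.-1 j k <= u i j k) /\
  (forall k, (0 < k)%N -> u i j k.+1 <= u i j.-1 k <= u i j k).
Proof.
elim: i => [|i IHi] j.
  by split; [|split] => k //=; rewrite !u0j.
elim: j => [|j IHj].
  by split; [|split] => k //=; rewrite !ui0 ?lexx.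
have [l'0 [_ l'c]] := IHi j.+1.
have [l''0 [l''b _]] := IHj.
have {}l''b : forall k, (0 < k)%N -> u i.+1 j k.+1 <= u i j k <= u i.+1 j k := l''b.
have {}l'c : forall k, (0 < k)%N -> u i j.+1 k.+1 <= u i j k <= u i j.+1 k := l'c.
have low : forall k, (0 < k)%N -> u i j.+1 k <= u i.+1 j.+1 k /\ u i.+1 j k <= u i.+1 j.+1 k.
  move=> k k0.
  case: (leqP k (minn i.+1 j.+1)) => hk.
    rewrite u_rec //.
    have t0 := tv_ge0 i.+1 j.+1.
    have hm : u i j k.-1 <= u i j.+1 k.-1 /\ u i j k.-1 <= u i.+1 j k.-1.
      case: k k0 hk => [|[|k]] //= _ _; first by rewrite !uij0.
      have := l'c k.+1 isT; have := l''b k.+1 isT; move=> /andP[_ ->] /andP[_ ->]; done.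
    case: hm => hm1 hm2.
    case: ifP => _; split; mm.
  rewrite !u_big //; lia.
have up : forall k, (0 < k)%N -> u i.+1 j.+1 k.+1 <= u i j.+1 k /\ u i.+1 j.+1 k.+1 <= u i.+1 j k.
  move=> k k0.
  case: (leqP k.+1 (minn i.+1 j.+1)) => hk; last first.
    by rewrite u_big //; split.
  rewrite u_rec //.
  have -> : (k.+1 == 1)%N = false by case: k k0 {hk}.
  rewrite addr0 succnK.
  have := l'c k k0; have := l''b k k0; move=> /andP[h1 h2] /andP[h3 h4].
  split; mm.
split; [|split] => k.
- case: k => [|k]; first by rewrite uij0.
  case: (low k.+1 isT) => h _; have := l'0 k.+1; lia.
- move=> k0; rewrite succnK; case: (low k k0) => h _; case: (up k k0) => h' _; lia.
- move=> k0; rewrite succnK; case: (low k k0) => _ h; case: (up k k0) => _ h'; lia.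
Qed.

Lemma u_ge0 i j k : 0 <= u i j k.
Proof. by case: (inv i j). Qed.

Lemma ubar0 i j : ubar la T i j 0 = 0.
Proof. by rewrite /ubar big_nat1 uij0. Qed.
Lemma ubarS i j k : ubar la T i j k.+1 = ubar la T i j k + u i j k.+1.
Proof. by rewrite /ubar big_nat_recr. Qed.

Lemma Ek i j k : (0 < k)%N -> (k <= minn i.+1 j.+1)%N ->
  ubar la T i.+1 j.+1 k = ubar la T i j.+1 k.-1 + ubar la T i.+1 j k.-1 - ubar la T i j k.-1
     + Num.max (u i j.+1 k) (u i.+1 j k) + tv la T i.+1 j.+1.
Proof.
elim: k => // k IH _ hk.
case: k IH hk => [|k] IH hk.
  rewrite ubarS ubar0 u_rec // !ubar0 !uij0 eqxx; mm.
have hk' : (k.+1 <= minn i.+1 j.+1)%N by lia.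
rewrite ubarS (IH isT hk') u_rec //.
rewrite !succnK !ubarS (_ : (k.+2 == 1)%N = false) // addr0; mm.
Qed.

Lemma ubar_top i j d : ubar la T i j (minn i j + d) = ubar la T i j (minn i j).
Proof.
elim: d => [|d IH]; first by rewrite addn0.
by rewrite addnS ubarS IH u_big ?addr0 //; lia.
Qed.

Definition rectt i j := \sum_(1 <= k < i.+1) \sum_(1 <= l < j.+1) tv la T k l.

Lemma rectt0 i : rectt 0 i = 0 /\ rectt i 0 = 0.
Proof.
rewrite /rectt big_geq //; split => //.
by rewrite big1 // => k _; rewrite big_geq.
Qed.

Lemma rectt_rec i j : rectt i.+1 j.+1 = rectt i j.+1 + rectt i.+1 j - rectt i j + tv la T i.+1 j.+1.
Proof.
rewrite /rectt.
set I := fun k n => \sum_(1 <= l < n.+1) tv la T k l.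
have H3 : forall k, I k j.+1 = I k j + tv la T k j.+1 by move=> k; rewrite /I big_nat_recr.
have H1 : forall n, \sum_(1 <= k < i.+2) I k n = \sum_(1 <= k < i.+1) I k n + I i.+1 n
  by move=> n; rewrite big_nat_recr.
rewrite -/(I _ _) (H1 j.+1) (H1 j) -/(I _ _) H3.
under eq_bigr do rewrite -/(I _ j.+1) H3.
rewrite big_split /=.
set X := \sum_(1 <= k < i.+1) I k j. set Y := \sum_(1 <= k < i.+1) _. lia.
Qed.

Lemma ubar_top2 i j k k2 : (minn i j <= k)%N -> (minn i j <= k2)%N ->
  ubar la T i j k = ubar la T i j k2.
Proof.
move=> h h2; rewrite -(subnKC h) -(subnKC h2) !ubar_top //.
Qed.

Lemma Ftop i j : ubar la T i j (minn i j) = rectt i j.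
Proof.
elim: i j => [|i IHi] j.
  by rewrite min0n ubar0 (rectt0 j).1.
elim: j => [|j IHj].
  by rewrite minn0 ubar0 (rectt0 i.+1).2.
rewrite Ek // ?minnSS //= rectt_rec -(IHi j) -(IHi j.+1) -IHj.
have E1 : u i j.+1 (minn i j).+1 = 0 \/ u i.+1 j (minn i j).+1 = 0.
  case: (leqP i j) => h; [left|right]; rewrite u_big //; lia.
have -> : Num.max (u i j.+1 (minn i j).+1) (u i.+1 j (minn i j).+1) =
   u i j.+1 (minn i j).+1 + u i.+1 j (minn i j).+1.
  have := u_ge0 i j.+1 (minn i j).+1; have := u_ge0 i.+1 j (minn i j).+1.
  case: E1 => ->; mm.
rewrite (@ubar_top2 i j.+1 (minn i j.+1) (minn i j).+1); try lia.
rewrite (@ubar_top2 i.+1 j (minn i.+1 j) (minn i j).+1); try lia.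
rewrite !ubarS; lia.
Qed.
End S.

Lemma shape_down la i j i' j' : is_partition la -> in_shape la i j ->
  (0 < i')%N -> (i' <= i)%N -> (0 < j')%N -> (j' <= j)%N -> in_shape la i' j'.
Proof.
move=> /andP[srt _] /and4P[i0 isz j0 jle] i'0 i'i j'0 j'j.
apply/and4P; split => //; first by lia.
have tr : transitive geq by move=> a b c h1 h2; apply: leq_trans h2 h1.
have := sorted_leq_nth tr (@leqnn) 0%N srt.
move=> /(_ i'.-1 i.-1); rewrite !inE => H.
have : (nth 0 la i.-1 <= nth 0 la i'.-1)%N by apply: H; lia.
lia.
Qed.

Lemma rect_eq la T i j i' j' : is_partition la -> in_shape la i j ->
  (i' <= i)%N -> (j' <= j)%N -> rect la T i' j' = rectt la T i' j'.
Proof.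
move=> hp hs hi hj.
case: (posnP i') => [->|i0]; first by rewrite /rect (rectt0 la T j').1.
case: (posnP j') => [->|j0].
  by rewrite /rect (rectt0 la T i').2 /in_shape !andbF.
rewrite /rect (shape_down _ _ _ _ _ hp hs) //.
apply: eq_big_nat => k /andP[k1 k2]; apply: eq_big_nat => l /andP[l1 l2].
rewrite /Defs.tval (shape_down _ _ _ _ _ hp hs) //; lia.
Qed.

Theorem proposition4p3 (la : seq nat) (T : nat -> nat -> nat) :
  is_partition la ->
  forall i j : nat,
    (exists a b : nat, [/\ (a <= 1)%N, (b <= 1)%N & in_shape la (i + a) (j + b)]) ->
    [/\ utilde la T i j 0 = - rect la T i j,
        utilde la T i j (minn i j) = 0
      & forall k : nat, (0 < k)%N -> (k < minn i j)%N ->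
          utilde la T i j k =
            Num.max (utilde la T i.-1 j k + utilde la T i j.-1 k.-1)
                    (utilde la T i.-1 j k.-1 + utilde la T i j.-1 k)
            - utilde la T i.-1 j.-1 k.-1].
Proof.
move=> hp i j [a [b [ha hb hs]]].
have hij : (0 < i)%N -> (0 < j)%N -> in_shape la i j.
  by move=> i0 j0; apply: (shape_down _ _ _ _ _ hp hs) => //; lia.
split.
- by rewrite /utilde ubar0 sub0r.
- case: (posnP i) => [->|i0].
    by rewrite /utilde min0n ubar0 (rect_eq _ T _ _ _ _ hp hs) ?(rectt0 la T j).1 ?subr0 //; lia.
  case: (posnP j) => [->|j0].
    by rewrite /utilde minn0 ubar0 (rect_eq _ T _ _ _ _ hp hs) ?(rectt0 la T i).2 ?subr0 //; lia.
  by rewrite /utilde Ftop (rect_eq _ T _ _ _ _ hp (hij i0 j0)) ?subrr.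
- move=> k k0 km.
  have i0 : (1 < i)%N by lia.
  have j0 : (1 < j)%N by lia.
  have hs' := hij (ltnW i0) (ltnW j0).
  rewrite /utilde !(rect_eq _ T _ _ _ _ hp hs') ?leq_pred //.
  clear hij hs ha hb.   case: i i0 km hs' => [|i] // i0; case: j j0 => [|j] // j0 km hs'.
  rewrite !succnK Ek //; last by lia.
  rewrite rectt_rec.
  case: k k0 km => [|k] // k0 km.
  rewrite !succnK !ubarS; mm.
Qed.
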